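(* Let $A$ be a linear Nakayama algebra with simple modules $S_0,\dots,S_{n-1}$, Kupisch series $[c_0,\dots,c_{n-1}]$ and Jacobson radical $J$, and let $d_j=\dim_K D(Ae_j)$. Let $0\le s\le n-2$ and $1\le t\le c_s-1$. Then the module $e_sJ^t$ has injective dimension at most one if and only if $d_{s+c_s-1}-c_s+t=d_{s+t-1}$, and in this case its injective dimension equals one. In particular, $e_sJ$ has injective dimension at most one if and only if $d_{s+c_s-1}-c_s+1=d_s$.
   Context: $K$ is a field; a linear Nakayama algebra with $n$ simple modules is a connected algebra $A=KQ/I$ with $Q$ the quiver $0\to1\to\cdots\to n-1$ and $I$ admissible; modules are finite-dimensional right modules. $e_iA$ is uniserial with composition factors $S_i,\dots,S_{i+c_i-1}$ from top to socle, $c_i=\dim_K e_iA$. $D=\operatorname{Hom}_K(-,K)$ and $D(Ae_j)$ is the injective envelope of $S_j$. *)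

(* Defs.v *)
(* Finite-dimensional right modules over a linear Nakayama
   algebra A = KQ/I, Q : 0 -> 1 -> ... -> n-1, encoded as representations of
   the bound quiver.  The admissible ideal I is determined by the Kupisch
   series c : I is generated by the paths of length c_i starting at i. *)
From HB Require Import structures.
From mathcomp Require Import all_boot all_order all_algebra.
Set Implicit Arguments. Unset Strict Implicit. Unset Printing Implicit Defensive.
Import GRing.Theory.
Local Open Scope ring_scope.

(* A representation of the quiver 0 -> 1 -> 2 -> ... : vector spaces K^(rdim i)
   (row vectors) and linear maps given by matrices acting on the right. *)
Record rep (K : fieldType) := Rep {
  rdim : nat -> nat ;
  rmap : forall i : nat, 'M[K]_(rdim i, rdim i.+1) }.

Section Nakayama.
Variables (K : fieldType) (n : nat) (c : nat -> nat).

Fixpoint pmap (M : rep K) (i k : nat) : 'M[K]_(rdim M i, rdim M (k + i)%N) :=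
  match k return 'M[K]_(rdim M i, rdim M (k + i)%N) with
  | 0 => 1%:M
  | k'.+1 => pmap M i k' *m rmap M (k' + i)
  end.

(* M is a (finite-dimensional right) A-module: supported on vertices 0..n-1
   and annihilated by the generating relations of I. *)
Definition is_module (M : rep K) : Prop :=
  (forall i, (n <= i)%N -> rdim M i = 0%N) /\
  (forall i, (i < n)%N -> pmap M i (c i) = 0).

Definition hom (M N : rep K) := forall i : nat, 'M[K]_(rdim M i, rdim N i).

Definition is_hom (M N : rep K) (f : hom M N) : Prop :=
  forall i, rmap M i *m f i.+1 = f i *m rmap N i.

Definition mono (M N : rep K) (f : hom M N) : Prop := forall i, row_free (f i).
Definition epi (M N : rep K) (f : hom M N) : Prop := forall i, row_full (f i).
Definition exact_at (M N P : rep K) (f : hom M N) (g : hom N P) : Prop :=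
  forall i, (f i == kermx (g i))%MS.

Definition injective_mod (I : rep K) : Prop :=
  is_module I /\
  forall (M N : rep K) (f : hom M N) (g : hom M I),
    is_module M -> is_module N -> is_hom f -> is_hom g -> mono f ->
    exists h : hom N I, is_hom h /\ forall i, f i *m h i = g i.

(* injective dimension <= m : existence of an injective coresolution
   0 -> M -> I_0 -> ... -> I_m -> 0, written as a chain of short exact
   sequences 0 -> M -> I_0 -> C -> 0 with id C <= m-1. *)
Fixpoint idim_le (m : nat) (M : rep K) : Prop :=
  match m with
  | 0 => injective_mod M
  | m'.+1 => exists (I C : rep K) (f : hom M I) (p : hom I C),
      injective_mod I /\ is_module C /\ is_hom f /\ is_hom p /\
      mono f /\ epi p /\ exact_at f p /\ idim_le m' C
  end.

(* The uniserial module with basis the paths from s of length >= t and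
   < c_s, i.e. e_s J^t : K at vertices s+t, ..., s+c_s-1, arrows acting by 1. *)
Definition eJ (s t : nat) : rep K :=
  @Rep K (fun i => if (((s + t) <= i) && (i <= s + c s - 1))%N then 1%N else 0%N)
         (fun i => const_mx 1).

(* d_j = dim_K D(A e_j) = dim_K A e_j = number of nonzero paths ending at j,
   i.e. the number of i <= j with j - i < c_i. *)
Definition dinj (j : nat) : nat := count (fun i => (j < i + c i)%N) (iota 0 j.+1).

End Nakayama.

(* Main.v *)
Require Import Defs.
From mathcomp Require Import all_boot all_order all_algebra.
From mathcomp Require Import zify.
Set Implicit Arguments. Unset Strict Implicit. Unset Printing Implicit Defensive.
Import GRing.Theory.
Local Open Scope ring_scope.
Local Open Scope nat_scope.


Lemma mx_dim0 (K : fieldType) p q (A B : 'M[K]_(p,q)) : (p = 0 \/ q = 0)%N -> A = B.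
Proof.
move=> H; apply/matrixP => i j; case: H => H.
  by exfalso; case: i => k; rewrite H.
by exfalso; case: j => k; rewrite H.
Qed.

Lemma const_mul (K : fieldType) p q r :
  (const_mx (1%R:K) : 'M_(p,q)) *m (const_mx (1%R:K) : 'M_(q,r)) = const_mx (q%:R)%R.
Proof.
apply/matrixP => i j; rewrite !mxE.
under eq_bigr do rewrite !mxE mulr1.
by rewrite sumr_const card_ord.
Qed.

Lemma const_id (K : fieldType) p : (p <= 1)%N -> (const_mx (1%R:K) : 'M_(p,p)) = 1%:M.
Proof.
move=> Hp; apply/matrixP => i j; rewrite !mxE.
have -> : i = j by apply/val_inj => /=; have := ltn_ord i; have := ltn_ord j; lia.
by rewrite eqxx.
Qed.

Lemma const_mul_eq0 (K : fieldType) q r (A : 'M[K]_(q,r)) :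
  (q <= 1)%N -> (const_mx (1%R:K) : 'M_(1,q)) *m A = 0%R -> A = 0%R.
Proof.
move=> Hq H; apply/matrixP => i j.
have := congr1 (fun M : 'M_(1,r) => M ord0 j) H; rewrite !mxE.
rewrite (bigD1 i) //= big1; first by rewrite mxE mul1r addr0.
move=> k Hk; exfalso; move: Hk; have -> : k = i; last by rewrite eqxx.
by apply/val_inj => /=; have := ltn_ord i; have := ltn_ord k; lia.
Qed.

Definition Int (K : fieldType) (x y : nat) : rep K :=
  @Rep K (fun i => if ((x <= i) && (i <= y))%N then 1%N else 0%N) (fun i => const_mx (1%R:K)).

Lemma count_thr (P : pred nat) N :
  (forall i i', (i <= i')%N -> (i' < N)%N -> P i -> P i') ->
  forall i, (i < N)%N -> P i = (N - count P (iota 0 N) <= i)%N.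
Proof.
elim: N => [|N IH] Hup i Hi //.
have IH' := IH (fun i i' h1 h2 => Hup i i' h1 (ltnW h2)).
rewrite -addn1 iotaD count_cat /= add0n addn0.
case HN: (P N).
  have Hc := count_size P (iota 0 N); rewrite size_iota in Hc.
  case: (ltnP i N) => HiN; first by rewrite IH' //; apply/idP/idP; lia.
  have -> : i = N by lia.
  by rewrite HN; symmetry; apply/idP; lia.
have H0 : count P (iota 0 N) = 0%N.
  apply/eqP; rewrite -leqn0 leqNgt -has_count; apply/hasP => -[j].
  rewrite mem_iota => /andP [_ Hj] Pj.
  by have := Hup j N (ltnW Hj) (ltnSn N) Pj; rewrite HN.
rewrite H0 addn0; case Pi: (P i).
  by have := Hup i N ltac:(lia) (ltnSn N) Pi; rewrite HN.
by symmetry; apply/negbTE; lia.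
Qed.

Ltac dimcase := repeat match goal with |- context [if ?b then _ else _] => case: (boolP b) => /= ? end.

Lemma zz (x y i : nat) : (x <= i) && (i <= y) -> ~~ ((x <= i.+1) && (i.+1 <= y)) -> i = y.
Proof. move=> *. lia. Qed.

Lemma Int_module (K : fieldType) n c x y : (y < n)%N ->
  (forall i, (x <= i)%N -> (i <= y)%N -> (y < i + c i)%N) -> is_module n c (Int K x y).
Proof.
move=> Hy Hc; split => i Hi /=.
  by dimcase => //; lia.
apply: mx_dim0 => /=; dimcase; try lia.
have := Hc i; lia.
Qed.

Lemma const_hom (K : fieldType) (R1 R2 : rep K) :
  (forall i, rmap R1 i = const_mx (1%R:K)) -> (forall i, rmap R2 i = const_mx (1%R:K)) ->
  (forall i, rdim R1 i = 0 \/ rdim R2 i.+1 = 0 \/ rdim R1 i.+1 = rdim R2 i)%N ->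
  is_hom (fun i => const_mx (1%R:K) : 'M[K]_(rdim R1 i, rdim R2 i)).
Proof.
move=> H1 H2 H i; rewrite H1 H2 !const_mul.
case: (H i) => [h|[h|h]]; [apply: mx_dim0; left | apply: mx_dim0; right | by rewrite h].
  by [].
by [].
Qed.

Lemma const_free (K : fieldType) p q : (p = 0 \/ (p = 1 /\ q = 1))%N ->
  row_free (const_mx (1%R:K) : 'M_(p,q)).
Proof.
case=> [->|[-> ->]]; first by rewrite /row_free -leqn0 rank_leq_row.
by rewrite const_id // /row_free mxrank1.
Qed.

Lemma const_full (K : fieldType) p q : (q = 0 \/ (p = 1 /\ q = 1))%N ->
  row_full (const_mx (1%R:K) : 'M_(p,q)).
Proof.
case=> [->|[-> ->]]; first by rewrite /row_full -leqn0 rank_leq_col.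
by rewrite const_id // /row_full mxrank1.
Qed.

Lemma const_exact (K : fieldType) p q r :
  (q = 0 \/ (q = 1 /\ p = 1 /\ r = 0) \/ (q = 1 /\ p = 0 /\ r = 1))%N ->
  ((const_mx (1%R:K) : 'M_(p,q)) == kermx (const_mx (1%R:K) : 'M_(q,r)))%MS.
Proof.
case=> [->|[[-> [-> ->]]|[-> [-> ->]]]].
- apply/andP; split; rewrite [X in (X <= _)%MS]thinmx0; exact: sub0mx.
- apply/andP; split; last by apply: submx_full; rewrite const_id // /row_full mxrank1.
  by rewrite sub_kermx [X in X == _]thinmx0.
- apply/andP; split; first by rewrite [X in (X <= _)%MS]flatmx0 sub0mx.
  have /eqP -> : kermx (const_mx (1%R:K) : 'M_(1,1)) == 0%R.
    by rewrite kermx_eq0 const_id // /row_free mxrank1.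
  exact: sub0mx.
Qed.

Lemma IntR1 (K : fieldType) x y i : x <= i -> i <= y -> ((rdim (Int K x y) i)%:R : K) = 1%R.
Proof. by move=> h1 h2 /=; rewrite h1 h2. Qed.
Lemma IntR0 (K : fieldType) x y i : ~~ ((x <= i) && (i <= y)) -> ((rdim (Int K x y) i)%:R : K) = 0%R.
Proof. by move=> /= /negbTE ->. Qed.
Lemma Int_le1 (K : fieldType) x y i : rdim (Int K x y) i <= 1.
Proof. by rewrite /=; case: ifP. Qed.

Definition uvec (K : fieldType) (M N I : rep K) (f : Defs.hom M N) (g : Defs.hom M I) j l
  : 'M[K]_(rdim N l, 1) :=
  if l == j then pinvmx (f l) *m g l *m (const_mx (1%R:K) : 'M_(rdim I l, 1)) else 0%R.

Fixpoint Wv (K : fieldType) (N : rep K) (u : forall l, 'M[K]_(rdim N l, 1)) j d i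
  : 'M[K]_(rdim N i, 1) :=
  match d with
  | 0 => u i
  | d'.+1 => if i < j then rmap N i *m Wv u j d' i.+1 else u i
  end.

Lemma Wv_ge (K : fieldType) (N : rep K) (u : forall l, 'M[K]_(rdim N l, 1)) j d i : j <= i -> Wv u j d i = u i.
Proof. by case: d => //= d; rewrite ltnNge => ->. Qed.

Lemma Wv_stab (K : fieldType) (N : rep K) (u : forall l, 'M[K]_(rdim N l, 1)) j d i : j - i <= d -> Wv u j d i = Wv u j (j - i) i.
Proof.
elim: d i => [|d IH] i Hd; first by have -> : j - i = 0 by lia.
case: (ltnP i j) => Hij; last by rewrite !Wv_ge.
rewrite -(subnSK Hij) /= Hij IH //; lia.
Qed.

Lemma Wv_rec (K : fieldType) (N : rep K) (u : forall l, 'M[K]_(rdim N l, 1)) j i : i < j ->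
  Wv u j j i = rmap N i *m Wv u j j i.+1.
Proof.
move=> Hij; rewrite Wv_stab; last lia.
rewrite (@Wv_stab _ _ u j j i.+1); last lia.
by rewrite -(subnSK Hij) /= Hij.
Qed.

Lemma Wv_path (K : fieldType) (N : rep K) (u : forall l, 'M[K]_(rdim N l, 1)) j k i : i + k <= j ->
  Wv u j j i = Defs.pmap N i k *m Wv u j j (k + i).
Proof.
elim: k => [|k IH] H; first by rewrite /= mul1mx.
rewrite /= IH; last lia.
by rewrite -mulmxA -Wv_rec //; lia.
Qed.

Lemma inj_Int (K : fieldType) n c x j : j < n -> x <= j ->
  (forall i, i <= j -> (j < i + c i) = (x <= i)) -> injective_mod n c (Int K x j).
Proof.
move=> Hjn Hxj Hthr; split.
  by apply: Int_module => // i h1 h2; rewrite Hthr.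
move=> M N f g HM HN Hf Hg Hmono.
pose u := uvec f g j.
pose w := Wv u j j.
have Hw0 : forall i, i < x -> w i = 0%R.
  move=> i Hi.
  case: (ltnP j i) => Hji.
    by rewrite /w Wv_ge ?/u ?/uvec; [rewrite ifF //; apply/negbTE; lia | lia].
  have Hc : i + c i <= j.
    have H1 := Hthr i Hji; have H2 : (x <= i) = false by apply/negbTE; lia.
    by rewrite H2 in H1; move/negbT: H1; lia.
  rewrite /w (Wv_path _ Hc).
  case: (ltnP i n) => Hin; first by case: HN => _ ->; rewrite // mul0mx.
  by apply: mx_dim0; left; case: HN => -> .
have Hfw : forall k i, i + k = j -> x <= i ->
    f i *m w i = g i *m (const_mx (1%R:K) : 'M_(rdim (Int K x j) i, 1)).
  elim=> [|k IH] i Hik Hxi.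
    have ? : i = j by lia.
    subst i; rewrite /w Wv_ge // /u /uvec eqxx.
    by rewrite (mulmxA (f j) (pinvmx (f j) *m g j)) (mulmxA (f j) (pinvmx (f j))) mulmxVp // mul1mx.
  rewrite /w Wv_rec; last lia.
  rewrite mulmxA -Hf -mulmxA -/w (IH i.+1) ?addSnnS //; last lia.
  rewrite mulmxA Hg -mulmxA /= const_mul IntR1 //; lia.
exists (fun i => w i *m (const_mx (1%R:K) : 'M_(1, rdim (Int K x j) i))); split.
  move=> i; rewrite -mulmxA /= const_mul.
  case: (boolP ((x <= i.+1) && (i.+1 <= j))) => Hi1; last first.
    by apply: mx_dim0; right.
  have Hij : i < j by lia.
  case: (leqP x i) => Hxi.
    rewrite (_ : (i <= j) = true) /=; last lia.
    by rewrite mulr1n /w (@Wv_rec _ _ u j i) // mulmxA.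
  rewrite /= mulr0n (_ : const_mx 0%R = 0%R) //.
  by rewrite mulmx0 mulmxA /w -(@Wv_rec _ _ u j i) // -/w Hw0 // mul0mx.
move=> i.
case: (boolP ((x <= i) && (i <= j))) => Hi; last first.
  by apply: mx_dim0; right; rewrite /= (negbTE Hi).
rewrite mulmxA (Hfw (j - i) i) //; try lia.
rewrite -mulmxA const_mul /= const_id ?mulmx1 //; exact: Int_le1.
Qed.

Lemma not_inj_Int (K : fieldType) n c x y : y < n -> x <= y ->
  (forall i, x.-1 <= i -> i <= y -> y < i + c i) -> 0 < x ->
  ~ injective_mod n c (Int K x y).
Proof.
case: x => [|x] // Hyn Hxy Hc _ [HM Hlift].
have HY : is_module n c (Int K x y) by apply: Int_module.
have [h [Hh Hfh]] := Hlift (Int K x.+1 y) (Int K x y)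
  (fun i => const_mx (1%R:K)) (fun i => 1%:M) HM HY
  (@const_hom K (Int K x.+1 y) (Int K x y) (fun i => erefl) (fun i => erefl) ltac:(by move=> i /=; dimcase; lia))
  ltac:(by move=> i; rewrite mulmx1 mul1mx)
  ltac:(by move=> i; apply: const_free => /=; dimcase; lia).
have H1 := Hh x.
rewrite (@mx_dim0 _ _ _ (h x) 0%R) in H1; last by right => /=; dimcase; lia.
rewrite mul0mx in H1.
have H2 : (const_mx (1%R:K) : 'M_(1, rdim (Int K x y) x)) *m (rmap (Int K x y) x *m h x.+1) = 0%R.
  by rewrite H1 mulmx0.
rewrite mulmxA const_mul in H2.
rewrite (@IntR1 K x y x) // in H2; last lia.
have H3 := const_mul_eq0 (Int_le1 _ _ _ _) H2.
have := Hfh x.+1; rewrite H3 mulmx0 => /(congr1 mxrank).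
by rewrite mxrank0 mxrank1 /= leqnn Hxy.
Qed.

Lemma const_cancel (K : fieldType) p q r (A B : 'M[K]_(q,r)) : p = 1 -> q <= 1 ->
  (const_mx (1%R:K) : 'M_(p,q)) *m A = (const_mx (1%R:K) : 'M_(p,q)) *m B -> A = B.
Proof.
move=> -> Hq H; apply/eqP; rewrite -subr_eq0; apply/eqP.
by apply: const_mul_eq0 => //; rewrite mulmxBr H subrr.
Qed.

Lemma nec_Int (K : fieldType) n c k a1 b : b < n -> k < a1 -> a1 < b ->
  (forall i, k < i -> i <= b -> b < i + c i) ->
  (forall i, k <= i -> i <= a1 -> a1 < i + c i) ->
  k + c k <= b ->
  ~ idim_le n c 1 (Int K a1.+1 b).
Proof.
move=> Hbn Hka Hab HE HY Hk.
move=> [I [C [f [p [HI [HC [Hf [Hp [Hmono [Hepi [Hex HCinj]]]]]]]]]]].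
have HMm : is_module n c (Int K a1.+1 b) by apply: Int_module => // i h1 h2; apply: HE; lia.
have HEm : is_module n c (Int K k.+1 b) by apply: Int_module.
have HXm : is_module n c (Int K k.+1 a1).
  by apply: Int_module => [|i h1 h2]; [lia | have := HE i h1; lia].
have HYm : is_module n c (Int K k a1) by apply: Int_module => //; lia.
have Hι := @const_hom K (Int K a1.+1 b) (Int K k.+1 b) (fun i => erefl) (fun i => erefl)
  ltac:(by move=> i /=; dimcase; lia).
have Hιm : mono (fun i => const_mx (1%R:K) : 'M_(rdim (Int K a1.+1 b) i, rdim (Int K k.+1 b) i)).
  by move=> i; apply: const_free => /=; dimcase; lia.
have [u [Hu Hιu]] := HI.2 _ _ _ f HMm HEm Hι Hf Hιm.
have Hfp : forall i, f i *m p i = 0%R by move=> i; apply/sub_kermxP; case/andP: (Hex i).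
pose φ := fun i => (const_mx (1%R:K) : 'M_(rdim (Int K k.+1 a1) i, rdim (Int K k.+1 b) i))
   *m u i *m p i.
have Hφ : is_hom φ.
  move=> i; rewrite /φ.
  rewrite -!mulmxA -Hp (mulmxA (u i)) -Hu !mulmxA.
  rewrite !const_mul.
  case: (boolP ((k.+1 <= i) && (i <= a1))) => Hi; last first.
    by apply: mx_dim0; left; rewrite /= (negbTE Hi).
  case: (ltnP i a1) => Hia.
    by rewrite (@IntR1 K k.+1 a1 i.+1) ?(@IntR1 K k.+1 b i) //; lia.
  have ? : i = a1 by lia.
  subst i.
  rewrite (@IntR0 K k.+1 a1 a1.+1); last lia.
  rewrite (_ : const_mx 0%R = 0%R) // !mul0mx.
  have Hup : u a1.+1 *m p a1.+1 = 0%R.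
    apply: (@const_cancel K 1 _ _ _ _ (erefl 1)); first exact: Int_le1.
    rewrite mulmx0.
    have := congr1 (fun A => (const_mx (1%R:K) : 'M_(1, rdim (Int K a1.+1 b) a1.+1)) *m A) (Hfp a1.+1).
    rewrite /= -(Hιu a1.+1) !mulmxA const_mul (@IntR1 K a1.+1 b a1.+1) // mulmx0; apply.
  by rewrite -!mulmxA Hup !mulmx0.
have Hι' := @const_hom K (Int K k.+1 a1) (Int K k a1) (fun i => erefl) (fun i => erefl)
  ltac:(by move=> i /=; dimcase; lia).
have Hι'm : mono (fun i => const_mx (1%R:K) : 'M_(rdim (Int K k.+1 a1) i, rdim (Int K k a1) i)).
  by move=> i; apply: const_free => /=; dimcase; lia.
have [xi [Hxi Hιxi]] := HCinj.2 _ _ _ φ HXm HYm Hι' Hφ Hι'm.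
pose y1 := (const_mx (1%R:K) : 'M_(1, rdim (Int K k a1) k)) *m xi k.
have [B HB] := row_fullP (Hepi k).
pose x := y1 *m B.
have Hxp : x *m p k = y1 by rewrite /x -mulmxA HB mulmx1.
pose e := x *m rmap I k.
have He : e = (const_mx (1%R:K) : 'M_(1, rdim (Int K k.+1 b) k.+1)) *m u k.+1.
  have H1 : e *m p k.+1 = (const_mx (1%R:K) : 'M_(1, rdim (Int K k a1) k.+1)) *m xi k.+1.
    rewrite /e -mulmxA Hp mulmxA Hxp /y1 -mulmxA -Hxi mulmxA const_mul.
    by rewrite (@IntR1 K k a1 k) //; lia.
  have H2 : (const_mx (1%R:K) : 'M_(1, rdim (Int K k.+1 a1) k.+1)) *m φ k.+1 =
            (const_mx (1%R:K) : 'M_(1, rdim (Int K k a1) k.+1)) *m xi k.+1.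
    by rewrite -Hιxi mulmxA const_mul (@IntR1 K k.+1 a1 k.+1).
  have H3 : (const_mx (1%R:K) : 'M_(1, rdim (Int K k.+1 a1) k.+1)) *m φ k.+1 =
            (const_mx (1%R:K) : 'M_(1, rdim (Int K k.+1 b) k.+1)) *m u k.+1 *m p k.+1.
    by rewrite /φ !mulmxA const_mul (@IntR1 K k.+1 a1 k.+1).
  have H4 : ((e - (const_mx (1%R:K) : 'M_(1, rdim (Int K k.+1 b) k.+1)) *m u k.+1)%R <= kermx (p k.+1))%MS.
    by apply/sub_kermxP; rewrite mulmxBl H1 -H2 H3 subrr.
  have H5 : (f k.+1 == 0%R).
    by apply/eqP; apply: mx_dim0; left => /=; rewrite (_ : a1 < k.+1 = false) //; lia.
  case/andP: (Hex k.+1) => _ H6.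
  have := submx_trans H4 H6; rewrite (eqP H5) => /submx0null /eqP; rewrite subr_eq0 => /eqP //.
have Hz : forall l, 0 < l -> l + k <= b -> x *m Defs.pmap I k l =
    (const_mx (1%R:K) : 'M_(1, rdim (Int K k.+1 b) (l + k))) *m u (l + k).
  elim => [|l IH] // _ Hl.
  case: l IH Hl => [|l] IH Hl.
    by rewrite /= mul1mx; exact: He.
  rewrite /= mulmxA IH //; last lia.
  rewrite -mulmxA -Hu mulmxA const_mul (@IntR1 K k.+1 b (l.+1 + k)) //; lia.
have Hck : 0 < c k by have := HY k (leqnn k) (ltnW Hka); lia.
have := Hz (c k) Hck ltac:(lia).
rewrite (HI.1.2 k); last lia.
rewrite mulmx0 => /esym /(const_mul_eq0 (Int_le1 _ _ _ _)) Huv.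
move: (Hmono (c k + k)); rewrite -Hιu Huv mulmx0 /row_free mxrank0 /=.
have h1 : a1 < c k + k by have := HY k (leqnn k) (ltnW Hka); lia.
have h2 : c k + k <= b by lia.
by rewrite h1 h2.
Qed.

Lemma main_t (K : fieldType) (n : nat) (c : nat -> nat)
  (hlast : c n.-1 = 1%N)
  (hge2 : forall i, (i < n.-1)%N -> (2 <= c i)%N)
  (hkup : forall i, (i < n.-1)%N -> (c i <= (c i.+1).+1)%N)
  (s t : nat) (hs : (s <= n - 2)%N) (ht1 : (1 <= t)%N) (ht2 : (t <= c s - 1)%N) :
  (idim_le n c 1 (eJ K c s t) <->
     dinj c (s + c s - 1) - c s + t = dinj c (s + t - 1))
  /\ ~ idim_le n c 0 (eJ K c s t).
Proof.
have Hn : 2 <= n.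
  rewrite leqNgt; apply/negP => hn.
  have hs0 : s = 0 by lia.
  have e : n.-1 = 0 by lia.
  by rewrite e in hlast; rewrite hs0 hlast in ht2; lia.
have Hcs : 2 <= c s by apply: hge2; lia.
have Hmon1 : forall i, i < n.-1 -> i + c i <= i.+1 + c i.+1 by move=> i hi; have := hkup i hi; lia.
have Hmon : forall d i, i + d < n -> i + c i <= (i + d) + c (i + d).
  elim=> [|d IH] i hi; first by rewrite addn0.
  apply: (leq_trans (IH i ltac:(lia))); rewrite addnS; apply: Hmon1; lia.
have Hmon' : forall i i', i <= i' -> i' < n -> i + c i <= i' + c i'.
  by move=> i i' h1 h2; have := Hmon (i' - i) i ltac:(lia); rewrite subnKC.
have Hg : forall i, i < n -> i + c i <= n.
  move=> i hi; have := Hmon' i n.-1 ltac:(lia) ltac:(lia); rewrite hlast; lia.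
have Hc1 : forall i, i < n -> 1 <= c i.
  move=> i hi; case: (ltnP i n.-1) => h; first by have := hge2 i h; lia.
  have -> : i = n.-1 by lia.
  by rewrite hlast.
pose m j := j.+1 - dinj c j.
have Hthr : forall j, j < n -> forall i, i <= j -> (j < i + c i) = (m j <= i).
  move=> j hj i hi; rewrite /m /dinj; apply: (count_thr (P := fun i => j < i + c i)); last lia.
  move=> i0 i1 h1 h2 /= h3; have := Hmon' i0 i1 h1 ltac:(lia); lia.
have Hdle : forall j, dinj c j <= j.+1.
  by move=> j; rewrite /dinj; have := count_size (fun i => j < i + c i) (iota 0 j.+1); rewrite size_iota.
pose b := s + c s - 1.
have Hbn : b < n by have := Hg s ltac:(lia); rewrite /b; lia.
have Hmb : m b <= s by rewrite -Hthr //; rewrite /b; lia.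
have Hma : m (s + t - 1) <= m b.
  rewrite -Hthr; [|lia|lia]; have := Hthr b Hbn (m b) ltac:(lia); rewrite leqnn => /idP.
  rewrite /b; lia.
have Hma' : m (s + t - 1) <= s + t - 1 by rewrite -Hthr; [have := Hc1 (s+t-1); lia | lia | lia].
have Hdb := Hdle b; have Hda := Hdle (s + t - 1).
change (eJ K c s t) with (Int K (s + t) (s + c s - 1)); rewrite -/b.
split; last first.
  apply: not_inj_Int => //; [lia | | lia].
  move=> i h1 h2; rewrite Hthr //; lia.
have HeJ : Int K (s + t) b = Int K (s + t - 1).+1 b by congr Int; lia.
rewrite HeJ.
split.
  move=> Hid; apply/eqP; apply/negPn/negP => Hneq.
  have Hlt : m (s + t - 1) < m b.
    rewrite ltn_neqAle Hma andbT; apply: contra Hneq => /eqP Heq.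
    apply/eqP; move: Heq Hmb Hma Hma' Hdb Hda; rewrite /m /b; lia.
  apply: (@nec_Int K n c (m b).-1 (s + t - 1) b) Hid => //; try lia.
  - move=> i h1 h2; rewrite Hthr //; lia.
  - move=> i h1 h2; rewrite Hthr //; lia.
  - have := Hthr b Hbn (m b).-1 ltac:(lia); rewrite (_ : m b <= (m b).-1 = false); last lia.
    lia.
move=> Hcond.
have Heq : m (s + t - 1) = m b.
  have := Hcond; move: Hmb Hma Hma' Hdb Hda; rewrite /m /b; lia.
exists (Int K (m b) b), (Int K (m b) (s + t - 1)).
exists (fun i => const_mx (1%R:K)), (fun i => const_mx (1%R:K)).
have HCi : injective_mod n c (Int K (m b) (s + t - 1)).
  apply: inj_Int; [lia | lia | ]; move=> i hi; rewrite -Heq Hthr //; lia.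
split; first by apply: inj_Int => //; [lia | exact: Hthr].
split; first exact: HCi.1.
split; first by apply: const_hom => // i /=; dimcase; lia.
split; first by apply: const_hom => // i /=; dimcase; lia.
split; first by move=> i; apply: const_free => /=; dimcase; lia.
split; first by move=> i; apply: const_full => /=; dimcase; lia.
split; last exact: HCi.
by move=> i; apply: const_exact => /=; dimcase; lia.
Qed.

Theorem mainTheorem7 (K : fieldType) (n : nat) (c : nat -> nat)
  (* Kupisch series of a (connected) linear Nakayama algebra *)
  (hlast : c n.-1 = 1%N)
  (hge2 : forall i, (i < n.-1)%N -> (2 <= c i)%N)
  (hkup : forall i, (i < n.-1)%N -> (c i <= (c i.+1).+1)%N)
  (s t : nat) (hs : (s <= n - 2)%N) (ht1 : (1 <= t)%N) (ht2 : (t <= c s - 1)%N) :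
  (idim_le n c 1 (eJ K c s t) <->
     dinj c (s + c s - 1) - c s + t = dinj c (s + t - 1))
  /\ (dinj c (s + c s - 1) - c s + t = dinj c (s + t - 1) ->
        ~ idim_le n c 0 (eJ K c s t))
  /\ (idim_le n c 1 (eJ K c s 1) <->
        dinj c (s + c s - 1) - c s + 1 = dinj c s).
Proof.
have [H1 H2] := main_t K hlast hge2 hkup hs ht1 ht2.
split; first exact: H1.
split; first by move=> _.
have Hn : 2 <= n.
  rewrite leqNgt; apply/negP => hn.
  have hs0 : s = 0 by lia.
  have e : n.-1 = 0 by lia.
  by rewrite e in hlast; rewrite hs0 hlast in ht2; lia.
have Hcs : 2 <= c s by apply: hge2; lia.
have [H3 _] := main_t K hlast hge2 hkup hs (leqnn 1) ltac:(lia).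
by rewrite (_ : s + 1 - 1 = s) in H3; last lia.
Qed.
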